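(* Let $P$ be a Markov kernel on a finite set $\Omega$ (in the paper, a coordinate-replacement kernel restricted to its invariant set $\Omega$), let $G\subseteq\Omega$, and let $K_G(x,y)=P(x,y)\mathbf 1_{\{x,y\in G\}}$ for $x,y\in G$. For $x\in\Omega$ and integer $s\ge0$, let $\alpha^x_s=\delta_xP^s$, $\alpha^x_{s,G}(A)=\alpha^x_s(A\cap G)$, $\widetilde\alpha^x_{s,t}=\alpha^x_se^{t(P-I)}$ and $\lambda^x_{s,t}=\alpha^x_{s,G}e^{t(K_G-I)}$. Then for every integer $s\ge0$, integer $L\ge1$ and $t\ge0$, \[ \|\widetilde\alpha^x_{s,t}-\lambda^x_{s,t}\|_{\mathrm{TV}}\le\mathbb P_x(\exists\,u\in\{0,1,\dots,L\}:X_{s+u}\notin G)+\mathbb P(\operatorname{Poi}(t)>L), \] and the same right-hand side also bounds $1-\lambda^x_{s,t}(G)$.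
   Context: $(X_t)_{t\ge0}$ is the discrete-time chain with kernel $P$, with law $\mathbb P_x$ when started at $x$. $\operatorname{Poi}(t)$ is a Poisson random variable with mean $t$. $\lambda^x_{s,t}$ is a subprobability measure on $G$; the total variation distance between (sub)probability measures is $\|\nu-\lambda\|_{\mathrm{TV}}=\sup_A|\nu(A)-\lambda(A)|$. *)

(* Defs.v *)
From HB Require Import structures.
From mathcomp Require Import all_boot all_order all_algebra.
From mathcomp Require Import all_classical all_reals all_analysis.
Set Implicit Arguments. Unset Strict Implicit. Unset Printing Implicit Defensive.
Import Order.TTheory GRing.Theory Num.Theory.
Local Open Scope ring_scope.

Section Defs.
Variables (R : realType) (T : finType).

(* kernels / matrices indexed by T, and (sub)measures on T as functions *)
Definition kmat := T -> T -> R.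
Definition kvec := T -> R.

Definition kid : kmat := fun x y => if x == y then 1 else 0.
Definition kmul (A B : kmat) : kmat := fun x z => \sum_(y : T) A x y * B y z.
Definition kpow (A : kmat) (n : nat) : kmat := iter n (kmul^~ A) kid.
Definition vmul (a : kvec) (A : kmat) : kvec := fun y => \sum_(x : T) a x * A x y.

Definition kexp (A : kmat) : kmat := fun x y =>
  limn (fun N : nat => \sum_(k < N) kpow A k x y / (k`!)%:R).

Definition kgen (t : R) (A : kmat) : kmat := fun x y => t * (A x y - kid x y).

Definition krestr (P : kmat) (G : {set T}) : kmat :=
  fun x y => if (x \in G) && (y \in G) then P x y else 0.

Definition kdelta (x : T) : kvec := fun y => if y == x then 1 else 0.

Definition vmass (a : kvec) (A : {set T}) : R := \sum_(y in A) a y.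

Definition tvdist (nu la : kvec) : R :=
  \big[Num.max/0]_(A : {set T}) `|vmass nu A - vmass la A|.

Definition markov_kernel (P : kmat) : Prop :=
  (forall x y, 0 <= P x y) /\ (forall x, \sum_(y : T) P x y = 1).

(* law of the chain X_0 = x, ..., X_N: probability of an event on paths *)
Definition path_prob (P : kmat) (x : T) (N : nat)
  (E : pred {ffun 'I_N.+1 -> T}) : R :=
  \sum_(w : {ffun 'I_N.+1 -> T} | (w ord0 == x) && E w)
     \prod_(i < N) P (w (widen_ord (leqnSn N) i)) (w (lift ord0 i)).

Definition poisson_tail (t : R) (L : nat) : R :=
  1 - \sum_(k < L.+1) expR (- t) * t ^+ k / (k`!)%:R.

End Defs.
Arguments path_prob {R T} P x N E.

(* Main.v *)
Require Import Defs.
From HB Require Import structures.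
From mathcomp Require Import all_boot all_order all_algebra.
From mathcomp Require Import all_classical all_reals all_analysis.
From mathcomp Require Import ring lra.
Import Order.TTheory GRing.Theory Num.Theory.
Local Open Scope ring_scope.

Module MP1.
Import Order.TTheory GRing.Theory Num.Theory.
Local Open Scope ring_scope.

Section Mat.
Variables (R : realType) (T : finType).
Implicit Types (A B : kmat R T).

Lemma kpowS A n : kpow A n.+1 = kmul (kpow A n) A.
Proof. by []. Qed.

Lemma sum_kid (f : T -> R) y : \sum_z f z * kid R z y = f y.
Proof.
rewrite (bigD1 y) //= /kid eqxx mulr1 big1 ?addr0 // => z /negbTE ->.
by rewrite mulr0.
Qed.

Lemma kpow_binom A t k x y :
  kpow (kgen t A) k x y =
  \sum_(0 <= j < k.+1) t ^+ k * (-1) ^+ (k - j) * 'C(k, j)%:R * kpow A j x y.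
Proof.
elim: k y => [|k IH] y.
  by rewrite big_nat1 /= expr0 !mul1r.
rewrite kpowS /kmul.
under eq_bigr do rewrite IH /kgen !mulrBr.
rewrite sumrB.
have E1 : \sum_z (\sum_(0 <= j < k.+1) t ^+ k * (-1) ^+ (k - j) * 'C(k, j)%:R * kpow A j x z) * (t * A z y)
   = t * \sum_(0 <= j < k.+1) t ^+ k * (-1) ^+ (k - j) * 'C(k, j)%:R * kpow A j.+1 x y.
  rewrite [RHS]mulr_sumr; under eq_bigr do rewrite mulr_suml.
  rewrite exchange_big; apply: eq_bigr => j _.
  rewrite kpowS /kmul mulr_sumr mulr_sumr; apply: eq_bigr => z _.
  by rewrite !mulrA; congr (_ * _); rewrite mulrC !mulrA.
have E2 : \sum_z (\sum_(0 <= j < k.+1) t ^+ k * (-1) ^+ (k - j) * 'C(k, j)%:R * kpow A j x z) * (t * kid R z y)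
   = t * \sum_(0 <= j < k.+1) t ^+ k * (-1) ^+ (k - j) * 'C(k, j)%:R * kpow A j x y.
  under eq_bigr do rewrite mulrA.
  by rewrite sum_kid mulrC.
rewrite E1 E2 [RHS]big_nat_recl // [X in _ - t * X]big_nat_recl //.
rewrite [X in _ - t * (_ + X)](_ : _ = \sum_(0 <= j < k.+1)
    t ^+ k * (-1) ^+ (k - j.+1) * 'C(k, j.+1)%:R * kpow A j.+1 x y); last first.
  by rewrite big_nat_recr //= bin_small // mulr0 mul0r addr0.
rewrite mulrDr opprD addrCA; congr (_ + _).
  by rewrite !subn0 !bin0 !exprS; ring.
rewrite !mulr_sumr -sumrB; apply: eq_big_nat => j /andP[_ jk].
rewrite binS natrD subSS.
move: jk; rewrite ltnS leq_eqVlt => /orP[/eqP->|jk'].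
  by rewrite (bin_small (ltnSn k)) binn subnn expr0 exprS; ring.
by rewrite -(subnSK jk') !exprS; ring.
Qed.
End Mat.

End MP1.
Import MP1.

Module MP2.
Import Order.TTheory GRing.Theory Num.Theory.
Local Open Scope ring_scope.

Section Mat2.
Variables (R : realType) (T : finType).
Implicit Types (A B : kmat R T).

Lemma kpow_fact A t k x y :
  kpow (kgen t A) k x y / (k`!)%:R =
  \sum_(0 <= j < k.+1) (t ^+ j / (j`!)%:R * kpow A j x y) *
     ((- t) ^+ (k - j) / ((k - j)`!)%:R).
Proof.
rewrite kpow_binom mulr_suml; apply: eq_big_nat => j /andP[_ jk].
rewrite ltnS in jk.
rewrite -(bin_fact jk) !natrM [(- t) ^+ _]exprNn -{1}(subnKC jk) exprD.
have h1 : (j`!)%:R != 0 :> R by rewrite pnatr_eq0 -lt0n fact_gt0.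
have h2 : ((k - j)`!)%:R != 0 :> R by rewrite pnatr_eq0 -lt0n fact_gt0.
have h3 : ('C(k, j))%:R != 0 :> R by rewrite pnatr_eq0 -lt0n bin_gt0.
by field; rewrite h1 h2 h3.
Qed.

Definition substoch A := (forall x y, 0 <= A x y) /\ (forall x, \sum_y A x y <= 1).

Lemma kpow_ge0 A : (forall x y, 0 <= A x y) -> forall k x y, 0 <= kpow A k x y.
Proof.
move=> A0; elim=> [|k IH] x y; first by rewrite /= /kid; case: eqP.
by rewrite kpowS /kmul; apply: sumr_ge0 => z _; apply: mulr_ge0.
Qed.

Lemma kpow_row A : substoch A -> forall k x, \sum_y kpow A k x y <= 1.
Proof.
move=> [A0 A1]; elim=> [|k IH] x.
  by rewrite /= (bigD1 x) //= /kid eqxx big1 ?addr0 // => y /negbTE; rewrite eq_sym => ->.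
rewrite kpowS /kmul exchange_big /=.
apply: (le_trans _ (IH x)); apply: ler_sum => z _.
rewrite -mulr_sumr; apply: ler_piMr; first exact: kpow_ge0.
exact: A1.
Qed.

Lemma kpow_le1 A : substoch A -> forall k x y, kpow A k x y <= 1.
Proof.
move=> hA k x y; have := kpow_row A hA k x; apply: le_trans.
rewrite (bigD1 y) //= lerDl; apply: sumr_ge0 => z _; apply: kpow_ge0; by case: hA.
Qed.
End Mat2.
Arguments substoch {R T}.

End MP2.
Import MP2.

Module MP3.
Import Order.TTheory GRing.Theory Num.Theory.
Import numFieldNormedType.Exports.
Local Open Scope classical_set_scope.
Local Open Scope ring_scope.

Section An.
Variable R : realType.
Implicit Types x : R.

Definition ec (x : R) (j : nat) := x ^+ j / (j`!)%:R.
Definition es (x : R) (N : nat) := \sum_(0 <= k < N) ec x k.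

Lemma es_cvg x : es x @ \oo --> expR x.
Proof.
have -> : es x = series (exp_coeff x) by apply/funext => N.
exact: is_cvg_series_exp_coeff.
Qed.

Lemma ec_ge0 x j : 0 <= x -> 0 <= ec x j.
Proof. by move=> x0; rewrite /ec divr_ge0 // exprn_ge0. Qed.

Lemma es_nd x : 0 <= x -> nondecreasing_seq (es x).
Proof.
move=> x0; apply/nondecreasing_seqP => n; rewrite /es big_nat_recr //= lerDl.
exact: ec_ge0.
Qed.

Lemma es_le x N : 0 <= x -> es x N <= expR x.
Proof.
move=> x0; have h := nondecreasing_cvgn_le (@es_nd x x0).
rewrite -(cvg_lim _ (es_cvg x)) //; apply: h; apply: cvgP; exact: es_cvg.
Qed.

Lemma rearr (a b : nat -> R) N :
  \sum_(0 <= k < N) \sum_(0 <= j < k.+1) a j * b (k - j)%N =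
  \sum_(0 <= j < N) a j * \sum_(0 <= m < N - j) b m.
Proof.
elim: N => [|N IH]; first by rewrite !big_geq.
rewrite big_nat_recr //= IH.
rewrite [in RHS](eq_big_nat _ _ (F2 := fun j => a j * \sum_(0 <= m < N - j) b m + a j * b (N - j)%N)); last first.
  move=> j /andP[_ jN]; rewrite ltnS in jN.
  by rewrite (subSn jN) big_nat_recr //= mulrDr.
rewrite big_split /= [X in _ = X + _]big_nat_recr //= subnn [X in a N * X]big_geq // mulr0 addr0.
by [].
Qed.

Lemma binom2 x k :
  \sum_(0 <= j < k.+1) ec x j * ec x (k - j)%N = ec (x + x) k.
Proof.
rewrite /ec exprDn big_mkord mulr_suml; apply: eq_bigr => -[j /= jk] _.
rewrite ltnS in jk.
rewrite -(bin_fact jk) -mulr_natr !natrM.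
have h1 : (j`!)%:R != 0 :> R by rewrite pnatr_eq0 -lt0n fact_gt0.
have h2 : ((k - j)`!)%:R != 0 :> R by rewrite pnatr_eq0 -lt0n fact_gt0.
have h3 : ('C(k, j))%:R != 0 :> R by rewrite pnatr_eq0 -lt0n bin_gt0.
by field; rewrite h1 h2 h3.
Qed.
End An.
Arguments ec {R}. Arguments es {R}.

End MP3.
Import MP3.

Module MP4.
Import Order.TTheory GRing.Theory Num.Theory.
Import numFieldNormedType.Exports.
Local Open Scope classical_set_scope.
Local Open Scope ring_scope.

Section An2.
Variable R : realType.
Implicit Types x t : R.

Lemma es_split x {n M} : (n <= M)%N -> es x M = es x n + \sum_(n <= m < M) ec x m.
Proof. by move=> nM; rewrite /es (@big_cat_nat _ _ _ n 0 M) //. Qed.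

Lemma ec_norm t j : 0 <= t -> `|ec (- t) j| = ec t j.
Proof.
by move=> t0; rewrite /ec normrM normrX normrN (ger0_norm t0) ger0_norm // invr_ge0.
Qed.

Lemma tail_bound t n : 0 <= t -> `|expR (- t) - es (- t) n| <= expR t - es t n.
Proof.
move=> t0.
rewrite -subr_ge0.
apply: (@cvgr_to_ge _ \oo _ _ (fun M : nat => (es t M - es t n) - `|es (- t) M - es (- t) n|)).
  apply: cvgB; first by apply: cvgB; [exact: es_cvg | exact: cvg_cst].
  apply: cvg_norm; apply: cvgB; [exact: es_cvg | exact: cvg_cst].
near=> M; rewrite subr_ge0.
have nM : (n <= M)%N by near: M; exact: nbhs_infty_ge.
rewrite (es_split (-t) nM) (es_split t nM) [es (- t) n + _]addrC [es t n + _]addrC !addrK.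
apply: (le_trans (ler_norm_sum _ _ _)).
by apply: ler_sum => m _; rewrite ec_norm.
Unshelve. all: by end_near.
Qed.

Lemma cauchy_prod t (a : nat -> R) : 0 <= t -> (forall j, 0 <= a j) ->
  (forall j, a j <= ec t j) ->
  cvgn (fun N => \sum_(0 <= j < N) a j) /\
  (fun N => \sum_(0 <= k < N) \sum_(0 <= j < k.+1) a j * ec (- t) (k - j)%N)
     @ \oo --> limn (fun N => \sum_(0 <= j < N) a j) * expR (- t).
Proof.
move=> t0 a0 aLe.
set Sa := fun N => \sum_(0 <= j < N) a j.
have Sa_le N : Sa N <= es t N by apply: ler_sum => j _; exact: aLe.
have Sa_cvg : cvgn Sa.
  apply: nondecreasing_is_cvgn.
    by apply/nondecreasing_seqP => n; rewrite /Sa big_nat_recr //= lerDl.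
  by exists (expR t) => _ [n _ <-]; apply: (le_trans (Sa_le n)); exact: es_le.
split => //.
set S := fun N => _.
set e := expR (- t).
pose E := fun N => es t N * expR t - es (t + t) N.
have bound N : `|S N - Sa N * e| <= E N.
  rewrite /S rearr /Sa /e mulr_suml -sumrB.
  under eq_bigr do rewrite -mulrBr.
  apply: (le_trans (ler_norm_sum _ _ _)).
  apply: (@le_trans _ _ (\sum_(0 <= j < N) ec t j * (expR t - es t (N - j)))).
    apply: ler_sum => j _; rewrite normrM (ger0_norm (a0 j)).
    apply: ler_pM; [exact: a0 | exact: normr_ge0 | exact: aLe |].
    by rewrite distrC; apply: tail_bound.
  rewrite /E (_ : es (t + t) N = \sum_(0 <= k < N) \sum_(0 <= j < k.+1) ec t j * ec t (k - j)%N); last first.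
    by rewrite /es; apply: eq_bigr => k _; rewrite binom2.
  rewrite rearr /es mulr_suml -sumrB; apply: ler_sum => j _.
  by rewrite mulrBr.
have Ecvg : E @ \oo --> 0.
  rewrite (_ : 0 = expR t * expR t - expR (t + t)); last by rewrite expRD subrr.
  apply: cvgB; last exact: es_cvg.
  by apply: cvgM; [exact: es_cvg | exact: cvg_cst].
have Dcvg : (fun N => S N - Sa N * e) @ \oo --> 0.
  apply: (@squeeze_cvgr _ _ _ _ (fun N => - E N) E).
  - by near=> N; rewrite -ler_norml; apply: bound.
  - by rewrite -oppr0; apply: cvgN.
  - exact: Ecvg.
rewrite (_ : S = (fun N => (S N - Sa N * e) + Sa N * e)); last first.
  by apply/funext => N; rewrite subrK.
rewrite -[X in _ --> X]add0r; apply: cvgD => //.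
by apply: cvgM => //; exact: cvg_cst.
Unshelve. all: by end_near.
Qed.
End An2.

End MP4.
Import MP4.

Module MP5.
Import Order.TTheory GRing.Theory Num.Theory.
Set Implicit Arguments. Unset Strict Implicit. Unset Printing Implicit Defensive.
Local Open Scope ring_scope.

Section Paths.
Variables (R : realType) (T : finType) (P : kmat R T) (x : T).

Definition wat {N} (w : {ffun 'I_N.+1 -> T}) (k : nat) : T := w (inord k).

Definition pw N (w : {ffun 'I_N.+1 -> T}) : R :=
  \prod_(0 <= i < N) P (wat w i) (wat w i.+1).

Definition wok N (g : nat -> T -> bool) (w : {ffun 'I_N.+1 -> T}) :=
  all (fun k => g k (wat w k)) (iota 0 N.+1).

Fixpoint vg (g : nat -> T -> bool) (n : nat) : kvec R T :=
  match n with
  | 0 => fun y => if (y == x) && g 0%N y then 1 else 0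
  | n'.+1 => fun z => if g n z then \sum_y vg g n' y * P y z else 0
  end.

Definition wext N (w : {ffun 'I_N.+1 -> T}) (z : T) : {ffun 'I_N.+2 -> T} :=
  [ffun i : 'I_N.+2 => if (i < N.+1)%N then wat w i else z].

Definition winit N (w : {ffun 'I_N.+2 -> T}) : {ffun 'I_N.+1 -> T} :=
  [ffun i : 'I_N.+1 => wat w i].

Lemma wext_lt N w z k : (k < N.+1)%N -> wat (@wext N w z) k = wat w k.
Proof. by move=> kN; rewrite /wat ffunE inordK ?kN // ltnS ltnW. Qed.

Lemma wext_N N w z : wat (@wext N w z) N.+1 = z.
Proof. by rewrite /wat ffunE inordK // ltnn. Qed.

Lemma wextK N z (w : {ffun 'I_N.+2 -> T}) : wat w N.+1 = z -> wext (winit w) z = w.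
Proof.
move=> wz; apply/ffunP => i; rewrite ffunE.
case: ifP => iN.
  by rewrite /wat ffunE inordK // /wat inord_val.
have -> : i = inord N.+1.
  by apply: val_inj; rewrite /= inordK //; apply/eqP; rewrite eqn_leq -ltnS ltn_ord leqNgt iN.
by rewrite -wz.
Qed.

Lemma winitK N z (w : {ffun 'I_N.+1 -> T}) : winit (wext w z) = w.
Proof.
apply/ffunP => i; rewrite ffunE wext_lt // /wat inord_val //.
Qed.

Lemma pw_ext N w z : pw (@wext N w z) = pw w * P (wat w N) z.
Proof.
rewrite /pw big_nat_recr //= wext_N wext_lt //; congr (_ * _).
by apply: eq_big_nat => i /andP[_ iN]; rewrite !wext_lt // ltnS // ltnW.
Qed.

Lemma wok_ext N g w z : wok g (@wext N w z) = wok g w && g N.+1 z.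
Proof.
rewrite /wok.
have -> : iota 0 N.+2 = iota 0 N.+1 ++ [:: N.+1] by rewrite -addn1 iotaD.
rewrite all_cat all_seq1 wext_N; congr (_ && _).
apply: eq_in_all => k; rewrite mem_iota add0n => kN.
by rewrite wext_lt.
Qed.

Lemma path_sum_end N g z :
  \sum_(w : {ffun 'I_N.+1 -> T} | [&& wat w 0 == x, wok g w & wat w N == z]) pw w
  = vg g N z.
Proof.
elim: N z => [|N IH] z.
  rewrite /=.
  have E : forall w : {ffun 'I_1 -> T}, wat w 0 = w ord0.
    by move=> w; rewrite /wat; congr (w _); apply: val_inj; rewrite /= inordK.
  case: ifP => hz.
    rewrite (big_pred1 [ffun => z]); first by rewrite /pw big_geq.
    move=> w /=; rewrite /wok /= !E andbT.
    apply/idP/idP.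
      move=> /and3P[_ _ /eqP wz]; apply/eqP/ffunP => i; rewrite ffunE ord1.
      by [].
    move=> /eqP ->; rewrite ffunE eqxx andbT; move/andP: hz => [-> ->].
    by [].
  rewrite big_pred0 // => w; rewrite /wok /= !E andbT.
  apply/negP => /and3P[/eqP h1 h2 /eqP h3]; move: hz.
  by rewrite -h3 -h1 eqxx h2.
rewrite (reindex_onto (fun w => wext w z) (@winit N)); last first.
  by move=> w /and3P[_ _ /eqP]; apply: wextK.
rewrite /=.
under eq_bigl => w do rewrite winitK eqxx andbT wok_ext wext_N eqxx andbT.
have E0 : forall w, wat (@wext N w z) 0 = wat w 0 by move=> w; rewrite wext_lt.
under eq_bigl => w do rewrite E0.
under eq_bigr => w _ do rewrite pw_ext.
case: ifP => gz; last first.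
  by rewrite big_pred0 // => w; rewrite !andbF.
rewrite (partition_big (fun w => wat w N) predT) //=.
apply: eq_bigr => y _; rewrite -IH mulr_suml.
apply: congr_big => // w; first by rewrite andbT andbA.
by move=> /andP[_ /eqP ->].
Qed.
End Paths.

End MP5.
Import MP5.

Module MP6.
Import Order.TTheory GRing.Theory Num.Theory.
Set Implicit Arguments. Unset Strict Implicit. Unset Printing Implicit Defensive.
Local Open Scope ring_scope.

Section Comb.
Variables (R : realType) (T : finType) (P : kmat R T) (x : T).

Lemma vmul_kid (a : kvec R T) (y : T) : vmul a (@kid R T) y = a y.
Proof. exact: sum_kid. Qed.

Lemma vmul_kpowS (a : kvec R T) (A : kmat R T) n (z : T) :
  vmul a (kpow A n.+1) z = \sum_y vmul a (kpow A n) y * A y z.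
Proof.
rewrite /vmul kpowS /kmul.
under eq_bigr do rewrite mulr_sumr.
rewrite exchange_big /=; apply: eq_bigr => y _; rewrite mulr_suml.
by apply: eq_bigr => i _; rewrite mulrA.
Qed.

Lemma vmul_delta (B : kmat R T) (y : T) : vmul (kdelta R x) B y = B x y.
Proof.
rewrite /vmul (bigD1 x) //= /kdelta eqxx mul1r big1 ?addr0 // => i /negbTE ->.
by rewrite mul0r.
Qed.

Lemma path_sum N g :
  \sum_(w : {ffun 'I_N.+1 -> T} | (wat w 0 == x) && wok g w) pw P w
  = \sum_z vg P x g N z.
Proof.
rewrite (partition_big (fun w => wat w N) predT) //=.
apply: eq_bigr => z _; rewrite -path_sum_end; apply: eq_bigl => w.
by rewrite andbA.
Qed.

Lemma path_probE N (E : pred {ffun 'I_N.+1 -> T}) :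
  path_prob P x N E = \sum_(w | (wat w 0 == x) && E w) pw P w.
Proof.
have h0 : forall w : {ffun 'I_N.+1 -> T}, wat w 0 = w ord0.
  by move=> w; rewrite /wat; congr (w _); apply: val_inj; rewrite /= inordK.
rewrite /path_prob; apply: congr_big => // w.
  by rewrite h0.
move=> _; rewrite /pw big_mkord; apply: eq_bigr => i _; rewrite /wat.
have hi := ltn_ord i.
congr (P (w _) (w _)); apply: val_inj; rewrite /= ?/bump inordK //.
  by rewrite ltnS ltnW.
Qed.

Lemma vg_true n (y : T) : vg P x (fun _ _ => true) n y = vmul (kdelta R x) (kpow P n) y.
Proof.
elim: n y => [|n IH] y /=.
  by rewrite vmul_delta /= /kid andbT eq_sym.
by rewrite vmul_kpowS; apply: eq_bigr => z _; rewrite IH.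
Qed.

Lemma mass_pres (a : kvec R T) n : markov_kernel P ->
  \sum_y vmul a (kpow P n) y = \sum_y a y.
Proof.
move=> [_ P1]; elim: n => [|n IH]; first by apply: eq_bigr => y _; rewrite vmul_kid.
rewrite -IH; under eq_bigr do rewrite vmul_kpowS.
rewrite exchange_big /=; apply: eq_bigr => y _.
by rewrite -mulr_sumr P1 mulr1.
Qed.

Lemma mass_delta : \sum_y kdelta R x y = 1.
Proof.
rewrite (bigD1 x) //= /kdelta eqxx big1 ?addr0 // => y /negbTE ->. by [].
Qed.
End Comb.

End MP6.
Import MP6.

Module MP7.
Import Order.TTheory GRing.Theory Num.Theory.
Import numFieldNormedType.Exports.
Set Implicit Arguments. Unset Strict Implicit. Unset Printing Implicit Defensive.
Local Open Scope classical_set_scope.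
Local Open Scope ring_scope.

Section Glue.
Variables (R : realType) (T : finType).

Lemma cvg_fsum (I : Type) (r : seq I) (f : I -> nat -> R) (l : I -> R) :
  (forall i, f i @ \oo --> l i) ->
  (fun N => \sum_(i <- r) f i N) @ \oo --> \sum_(i <- r) l i.
Proof.
move=> hf; elim: r => [|i r IH].
  rewrite big_nil; under eq_cvg do rewrite big_nil; exact: cvg_cst.
rewrite big_cons; under eq_cvg do rewrite big_cons.
by apply: cvgD => //; exact: hf.
Qed.

Lemma kexp_eq (A : kmat R T) t x y : substoch A -> 0 <= t ->
  cvgn (fun N => \sum_(0 <= j < N) ec t j * kpow A j x y) /\
  kexp (kgen t A) x y =
    limn (fun N => \sum_(0 <= j < N) ec t j * kpow A j x y) * expR (- t).
Proof.
move=> hA t0.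
have a0 j : 0 <= ec t j * kpow A j x y.
  by apply: mulr_ge0; [exact: ec_ge0 | apply: kpow_ge0; case: hA].
have a1 j : ec t j * kpow A j x y <= ec t j.
  by apply: ler_piMr; [exact: ec_ge0 | exact: kpow_le1].
have [hc hl] := @cauchy_prod R t _ t0 a0 a1.
split => //.
rewrite /kexp; apply: cvg_lim => //.
apply: (cvg_trans _ hl); apply: near_eq_cvg; near=> N.
rewrite big_mkord; apply: eq_bigr => k _.
by rewrite kpow_fact.
Unshelve. all: by end_near.
Qed.

Lemma vmul_kexp (a : kvec R T) (A : kmat R T) t (y : T) : substoch A -> 0 <= t ->
  (fun N => expR (- t) * \sum_(0 <= j < N) ec t j * vmul a (kpow A j) y) @ \oo
    --> vmul a (kexp (kgen t A)) y.
Proof.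
move=> hA t0.
have E : (fun N => expR (- t) * \sum_(0 <= j < N) ec t j * vmul a (kpow A j) y) =
   (fun N => \sum_(x : T) a x * (expR (- t) * \sum_(0 <= j < N) ec t j * kpow A j x y)).
  apply/funext => N; rewrite /vmul.
  under [RHS]eq_bigr do rewrite mulr_sumr mulr_sumr.
  rewrite exchange_big /= mulr_sumr; apply: eq_bigr => j _.
  rewrite mulr_sumr mulr_sumr; apply: eq_bigr => x _; ring.
rewrite E /vmul; apply: cvg_fsum => x.
have [hc ->] := kexp_eq x y hA t0.
apply: cvgM; first exact: cvg_cst.
by rewrite mulrC; apply: cvgM => //; exact: cvg_cst.
Qed.
End Glue.

End MP7.
Import MP7.

Module MP8.
Import Order.TTheory GRing.Theory Num.Theory.
Import numFieldNormedType.Exports.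
Set Implicit Arguments. Unset Strict Implicit. Unset Printing Implicit Defensive.
Local Open Scope classical_set_scope.
Local Open Scope ring_scope.

Section Num.
Variable R : realType.

Lemma num_bound (t : R) (L N : nat) (c : nat -> R) (p : R) : 0 <= t -> 0 <= p ->
  (forall j, 0 <= c j <= 1) -> (forall j, (j <= L)%N -> c j <= p) ->
  expR (- t) * \sum_(0 <= j < N) ec t j * c j <= p + poisson_tail t L.
Proof.
move=> t0 p0 c01 cp.
have h1 : \sum_(0 <= j < N) ec t j * c j <=
    p * es t N + \sum_(0 <= j < N) (if (L < j)%N then ec t j else 0).
  rewrite /es mulr_sumr -big_split /=; apply: ler_sum => j _.
  have e0 := @ec_ge0 R t j t0; have /andP[c0 c1] := c01 j.
  case: (leqP j L) => hj.
    by rewrite addr0 mulrC; apply: ler_wpM2r => //; exact: cp.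
  apply: (@le_trans _ _ (ec t j)); first by rewrite ler_piMr.
  by rewrite lerDr mulr_ge0.
have h2 : \sum_(0 <= j < N) (if (L < j)%N then ec t j else 0) <= expR t - es t L.+1.
  have hN : (L.+1 <= N + L.+1)%N by rewrite leq_addl.
  have := @es_le R t (N + L.+1) t0; rewrite (@es_split R t _ _ hN) -lerBrDl.
  apply: le_trans.
  apply: (@le_trans _ _ (\sum_(0 <= j < N + L.+1) (if (L < j)%N then ec t j else 0))).
    rewrite (@big_cat_nat _ _ _ N 0 (N + L.+1)) //=; last by rewrite leq_addr.
    rewrite lerDl; apply: sumr_ge0 => j _; case: ifP => // _; exact: ec_ge0.
  rewrite (@big_cat_nat _ _ _ L.+1 0 (N + L.+1)) //= big_nat_cond big1 ?add0r.
    by apply: ler_sum_nat => j /andP[hj _]; rewrite hj.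
  by move=> j /andP[/andP[_ hj] _]; rewrite ltnNge -ltnS hj.
have e0 : 0 <= expR (- t) by exact: expR_ge0.
have eE : expR (- t) * expR t = 1 by rewrite mulrC expRxMexpNx_1.
apply: (@le_trans _ _ (expR (- t) * (p * es t N + (expR t - es t L.+1)))).
  by apply: ler_wpM2l => //; apply: (le_trans h1); rewrite lerD2l.
rewrite mulrDr; apply: lerD.
  rewrite mulrCA; apply: ler_piMr => //.
  by rewrite -eE ler_wpM2l // es_le.
rewrite /poisson_tail mulrBr eE lerB // /es big_mkord mulr_sumr.
by apply: ler_sum => k _; rewrite /ec mulrA.
Qed.
End Num.

End MP8.
Import MP8.

Module MP9.
Import Order.TTheory GRing.Theory Num.Theory.
Set Implicit Arguments. Unset Strict Implicit. Unset Printing Implicit Defensive.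
Local Open Scope ring_scope.

Section Spec.
Variables (R : realType) (T : finType) (P : kmat R T) (G : {set T}) (x : T) (s : nat).

Definition gG (k : nat) (y : T) := (s <= k)%N ==> (y \in G).

Lemma gGE k y : gG k y = (s <= k)%N ==> (y \in G). Proof. by []. Qed.

Lemma krestrE a b : krestr P G a b = if (a \in G) && (b \in G) then P a b else 0.
Proof. by []. Qed.

Lemma vgG_lt n (y : T) : (n < s)%N -> vg P x gG n y = vmul (kdelta R x) (kpow P n) y.
Proof.
elim: n y => [|n IH] y hn /=.
  by rewrite gGE leqNgt hn /= andbT vmul_delta /= /kid eq_sym.
rewrite gGE leqNgt hn /= vmul_kpowS; apply: eq_bigr => z _.
by rewrite IH // ltnW.
Qed.

Lemma vgG_s (y : T) : vg P x gG s y =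
  (if y \in G then vmul (kdelta R x) (kpow P s) y else 0).
Proof.
case Es: s => [|s'] /=.
  rewrite gGE Es leqnn /= vmul_delta /= /kid.
  by case: (y \in G); rewrite ?andbT ?andbF // eq_sym.
rewrite gGE Es leqnn /=; case: (y \in G) => //.
rewrite vmul_kpowS; apply: eq_bigr => z _.
by rewrite vgG_lt // Es.
Qed.

Lemma krestr_notin (A : kvec R T) j y : y \notin G ->
  vmul (fun z => if z \in G then A z else 0) (kpow (krestr P G) j) y = 0.
Proof.
case: j => [|j] yG.
  by rewrite vmul_kid (negbTE yG).
rewrite vmul_kpowS big1 // => z _.
by rewrite krestrE (negbTE yG) andbF mulr0.
Qed.

Lemma vgG_sk k (y : T) : vg P x gG (s + k) y =
  vmul (fun z => if z \in G then vmul (kdelta R x) (kpow P s) z else 0)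
       (kpow (krestr P G) k) y.
Proof.
elim: k y => [|k IH] y.
  by rewrite addn0 vgG_s vmul_kid.
rewrite addnS /= gGE (leq_trans (leq_addr k s) (leqnSn _)) /=.
rewrite vmul_kpowS.
case yG: (y \in G); last first.
  by rewrite big1 // => z _; rewrite krestrE yG andbF mulr0.
apply: eq_bigr => z _; rewrite IH krestrE yG andbT.
case zG: (z \in G) => //.
by rewrite krestr_notin ?zG // !mul0r.
Qed.

Lemma event_wok L (w : {ffun 'I_(s + L).+1 -> T}) :
  [exists u : 'I_L.+1, w (inord (s + u)) \notin G] = ~~ wok gG w.
Proof.
apply/existsP/allPn.
  move=> [u hu]; exists (s + u)%N.
    by rewrite mem_iota leq0n add0n /= ltnS leq_add2l -ltnS ltn_ord.
  by rewrite gGE leq_addr /=.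
move=> [k]; rewrite mem_iota add0n ltnS gGE => kL.
rewrite negb_imply => /andP[sk kG].
have hu : (k - s < L.+1)%N by rewrite ltnS leq_subLR.
exists (Ordinal hu) => /=.
by rewrite subnKC.
Qed.
End Spec.

End MP9.
Import MP9.

Unset Implicit Arguments.
Import numFieldNormedType.Exports.
Local Open Scope classical_set_scope.
Local Open Scope ring_scope.

Theorem lemma2p6 (R : realType) (T : finType) (P : kmat R T) (G : {set T})
  (x : T) (s L : nat) (t : R) :
  markov_kernel P -> (1 <= L)%N -> 0 <= t ->
  let alpha_s := vmul (kdelta R x) (kpow P s) in
  let alpha_sG := fun y => if y \in G then alpha_s y else 0 in
  let alpha_tilde := vmul alpha_s (kexp (kgen t P)) in
  let lambda := vmul alpha_sG (kexp (kgen t (krestr P G))) in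
  let bound := path_prob P x (s + L)%N
      (fun w => [exists u : 'I_L.+1, w (inord (s + u)) \notin G])
      + poisson_tail t L in
  tvdist alpha_tilde lambda <= bound /\ 1 - vmass lambda G <= bound.
Proof.
move=> hP hL ht alpha_s alpha_sG alpha_tilde lambda bound.
have [P0 P1] := hP.
have sP : substoch P by split => // y; rewrite P1.
have Kle y z : krestr P G y z <= P y z.
  by rewrite krestrE; case: ifP => // _; exact: P0.
have K0 y z : 0 <= krestr P G y z.
  by rewrite krestrE; case: ifP => // _; exact: P0.
have sK : substoch (krestr P G).
  split => // y; rewrite -(P1 y); apply: ler_sum => z _; exact: Kle.
have a0 y : 0 <= alpha_s y by rewrite /alpha_s vmul_delta; apply: kpow_ge0.
have aG0 y : 0 <= alpha_sG y by rewrite /alpha_sG; case: ifP.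
have aGle y : alpha_sG y <= alpha_s y by rewrite /alpha_sG; case: ifP.
pose v j y := vmul alpha_s (kpow P j) y.
pose u j y := vmul alpha_sG (kpow (krestr P G) j) y.
have u0 j y : 0 <= u j y.
  elim: j y => [|j IH] y; rewrite /u; first by rewrite vmul_kid; apply: aG0.
  by rewrite vmul_kpowS; apply: sumr_ge0 => z _; apply: mulr_ge0; [exact: IH | exact: K0].
have uv j y : u j y <= v j y.
  elim: j y => [|j IH] y; rewrite /u /v; first by rewrite !vmul_kid; apply: aGle.
  rewrite !vmul_kpowS; apply: ler_sum => z _.
  by apply: ler_pM; [exact: u0 | exact: K0 | exact: IH | exact: Kle].
have vsum j : \sum_y v j y = 1.
  by rewrite /v mass_pres // /alpha_s mass_pres // mass_delta.
have usum_le j : \sum_y u j y <= 1.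
  by rewrite -(vsum j); apply: ler_sum => y _.
have usum0 j : 0 <= \sum_y u j y by apply: sumr_ge0.
have mmono j : \sum_y u j.+1 y <= \sum_y u j y.
  rewrite /u; under eq_bigr do rewrite vmul_kpowS.
  rewrite exchange_big /=; apply: ler_sum => y _.
  rewrite -mulr_sumr; apply: ler_piMr; first exact: u0.
  by case: sK.
have mL j : (j <= L)%N -> \sum_y u L y <= \sum_y u j y.
  move=> jL; rewrite -(subnKC jL); elim: (L - j)%N => [|d IH]; first by rewrite addn0.
  by rewrite addnS; exact: le_trans (mmono _) IH.
have pval : path_prob P x (s + L)%N
      (fun w => [exists u : 'I_L.+1, w (inord (s + u)) \notin G]) = 1 - \sum_y u L y.
  rewrite path_probE.
  have tot : \sum_(w : {ffun 'I_(s + L).+1 -> T} | wat w 0 == x) pw P w = 1.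
    rewrite (eq_bigl (fun w => (wat w 0 == x) && wok (fun _ _ => true) w)); last first.
      by move=> w /=; rewrite (_ : wok _ w = true) ?andbT //; apply/allP.
    rewrite path_sum; under eq_bigr do rewrite vg_true.
    by rewrite mass_pres // mass_delta.
  have hc : \sum_(w : {ffun 'I_(s + L).+1 -> T} | (wat w 0 == x) &&
        ~~ [exists u : 'I_L.+1, w (inord (s + u)) \notin G]) pw P w = \sum_y u L y.
    rewrite (eq_bigl (fun w => (wat w 0 == x) && wok (gG G s) w)); last first.
      by move=> w /=; rewrite event_wok negbK.
    by rewrite path_sum; apply: eq_bigr => z _; rewrite vgG_sk.
  by rewrite -tot [in RHS](bigID (fun w : {ffun _ -> T} => [exists u : 'I_L.+1, w (inord (s + u)) \notin G])) /= hc addrK.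
have p0 : 0 <= path_prob P x (s + L)%N
      (fun w => [exists u : 'I_L.+1, w (inord (s + u)) \notin G]).
  by rewrite pval subr_ge0.
pose F N y := expR (- t) * \sum_(0 <= j < N) ec t j * v j y.
pose H N y := expR (- t) * \sum_(0 <= j < N) ec t j * u j y.
have Fc y : (fun N => F N y) @ \oo --> alpha_tilde y by exact: vmul_kexp.
have Hc y : (fun N => H N y) @ \oo --> lambda y by exact: vmul_kexp.
have Dc y : (fun N => F N y - H N y) @ \oo --> alpha_tilde y - lambda y.
  exact: cvgB.
have D0 y : 0 <= alpha_tilde y - lambda y.
  apply: (cvgr_to_ge (Dc y)); near=> N.
  rewrite /F /H -mulrBr -sumrB; apply: mulr_ge0; first exact: expR_ge0.
  apply: sumr_ge0 => j _; rewrite -mulrBr; apply: mulr_ge0; first exact: ec_ge0.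
  by rewrite subr_ge0.
have Dsum : \sum_y (alpha_tilde y - lambda y) <= bound.
  have h1 := cvg_fsum (r := index_enum T) Dc.
  apply: (cvgr_to_le h1); near=> N.
  rewrite /F /H.
  under eq_bigr do rewrite -mulrBr -sumrB.
  rewrite -mulr_sumr exchange_big /=.
  rewrite (eq_bigr (fun j => ec t j * (1 - \sum_y u j y))); last first.
    move=> j _; rewrite -(vsum j) -sumrB mulr_sumr; apply: eq_bigr => y _.
    by rewrite mulrBr.
  rewrite /bound; apply: num_bound => //.
    by move=> j; rewrite subr_ge0 usum_le /= lerBlDr lerDl.
  by move=> j jL; rewrite pval lerB // mL.
have lam0 y : y \notin G -> lambda y = 0.
  move=> yG; have h := Hc y.
  rewrite (_ : (fun N => H N y) = fun _ => 0) in h; last first.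
    apply/funext => N; rewrite /H big1 ?mulr0 // => j _.
    by rewrite /u /alpha_sG krestr_notin // mulr0.
  by rewrite -(cvg_lim _ h) // lim_cst.
have atil1 : \sum_y alpha_tilde y = 1.
  have h1 := cvg_fsum (r := index_enum T) Fc.
  have h2 : (fun N => \sum_(y <- index_enum T) F N y) @ \oo --> (1 : R).
    rewrite (_ : (fun N => _) = fun N => expR (- t) * es t N); last first.
      apply/funext => N; rewrite /F -mulr_sumr exchange_big /=; congr (_ * _).
      by apply: eq_bigr => j _; rewrite -mulr_sumr vsum mulr1.
    rewrite -(expRxMexpNx_1 t) [expR t * _]mulrC.
    by apply: cvgM; [exact: cvg_cst | exact: es_cvg].
  by rewrite -(cvg_lim _ h1) // (cvg_lim _ h2).
split.
  rewrite /tvdist; apply: bigmax_le => [|A _].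
    by apply: le_trans Dsum; apply: sumr_ge0 => y _.
  rewrite /vmass -sumrB ger0_norm; last by apply: sumr_ge0 => y _.
  apply: le_trans Dsum.
  rewrite [X in _ <= X](bigID (fun y => y \in A)) /= lerDl.
  by apply: sumr_ge0 => y _.
have lamG : \sum_y lambda y = vmass lambda G.
  rewrite /vmass [LHS](bigID (fun y => y \in G)) /=.
  rewrite [X in _ + X]big1 ?addr0 // => y yG; exact: lam0.
rewrite -lamG -atil1 -sumrB; exact: Dsum.
Unshelve. all: by end_near.
Qed.
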